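(* Let $w\in\mathbb R^m_{++}$ with $\sum_iw_i=1$, $x=x(w)$, $y=y(w)$, $\delta_i=w_i/(y_i\|\Delta b_i\|_1)$, and let $\tilde b_i=b_i^{(0)}+\sum_{l=1}^{N_i}\Delta b_i^l\tilde z_i^l$ with $\tilde z_i^1,\dots,\tilde z_i^{N_i}$ independent, symmetrically distributed random variables in $[-1,1]$. Let $\max(\Delta b_i)$ be the largest entry of $\Delta b_i$. Then $$\Pr\{\langle a_i,x\rangle>\tilde b_i\}\le B\Bigl(N_i,\ \delta_i\frac{\|\Delta b_i\|_1}{\max(\Delta b_i)}\Bigr),$$ where for $N\in\mathbb N$, $p>0$: $B(N,p)=2^{-N}\bigl[(1-\mu)\binom{N}{\lfloor\nu\rfloor}+\sum_{k=\lfloor\nu\rfloor+1}^{N}\binom{N}{k}\bigr]$ with $\nu=(N+p)/2$, $\mu=\nu-\lfloor\nu\rfloor$.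
   Context: $A\in\mathbb R^{m\times n}$ (rows $a_i^\top$) has full column rank $n\le m$, $b^{(0)}\in\mathbb R^m$, and $\{x:Ax\le b^{(0)}\}$ is bounded with nonempty interior. For $w\in\mathbb R^m_{++}$, the weighted center $(x(w),y(w),s(w))$ is the unique solution of $Ax+s=b^{(0)}$, $s>0$, $A^\top y=0$, $\mathrm{Diag}(s)y=w$. $\Delta b_i=(\Delta b_i^1,\dots,\Delta b_i^{N_i})$ is a nonzero vector with nonnegative entries. *)

(* Defs.v *)
From HB Require Import structures.
From mathcomp Require Import all_boot all_order all_algebra.
From mathcomp Require Import all_classical all_reals all_analysis.
Set Implicit Arguments. Unset Strict Implicit. Unset Printing Implicit Defensive.
Import Order.TTheory GRing.Theory Num.Theory.
Local Open Scope ring_scope.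
Local Open Scope classical_set_scope.

Definition poly_bounded (R : realType) m n (A : 'M[R]_(m, n)) (b : 'cV[R]_m) :=
  exists M : R, forall x : 'cV[R]_n,
    (forall i, (A *m x) i 0 <= b i 0) -> forall j, `|x j 0| <= M.

Definition poly_nonempty_interior (R : realType) m n (A : 'M[R]_(m, n)) (b : 'cV[R]_m) :=
  exists (x0 : 'cV[R]_n) (eps : R), 0 < eps /\
    forall x : 'cV[R]_n, (forall j, `|x j 0 - x0 j 0| < eps) ->
      forall i, (A *m x) i 0 <= b i 0.

Definition weighted_center (R : realType) m n (A : 'M[R]_(m, n)) (b w : 'cV[R]_m)
  (x : 'cV[R]_n) (y s : 'cV[R]_m) :=
  [/\ A *m x + s = b, (forall i, 0 < s i 0), A^T *m y = 0 &
      forall i, s i 0 * y i 0 = w i 0].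

(* B(N,p) = 2^{-N} [ (1-mu) C(N, floor nu) + sum_{k=floor nu + 1}^N C(N,k) ],
   nu = (N+p)/2, mu = nu - floor nu  (nu > 0 for p > 0, so truncn = floor) *)
Definition Bbound (R : realType) (N : nat) (p : R) : R :=
  let nu := (N%:R + p) / 2 in
  let k0 := Num.truncn nu in
  let mu := nu - k0%:R in
  (2 ^- N) * ((1 - mu) * ('C(N, k0))%:R
              + \sum_(k0.+1 <= k < N.+1) ('C(N, k))%:R).

Definition mutually_independent (R : realType) d (T : measurableType d)
  (P : probability T R) (N : nat) (z : 'I_N -> {RV P >-> R}) :=
  forall (J : {set 'I_N}) (B : 'I_N -> set R),
    (forall l, measurable (B l)) ->
    P (\bigcap_(l in [set l | l \in J]) (z l @^-1` B l)) =
    (\prod_(l in J) P (z l @^-1` B l))%E.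

Definition symmetric_rv (R : realType) d (T : measurableType d)
  (P : probability T R) (Z : {RV P >-> R}) :=
  forall B : set R, measurable B ->
    P (Z @^-1` B) = P ((fun t => - Z t) @^-1` B).

Definition norm1 (R : realType) N (v : 'I_N -> R) : R := \sum_(l < N) `|v l|.
Definition maxentry (R : realType) N (v : 'I_N -> R) : R := \big[Num.max/0]_(l < N) v l.

(* Main.v *)
Require Import Defs.
From HB Require Import structures.
From mathcomp Require Import all_boot all_order all_algebra.
From mathcomp Require Import all_classical all_reals all_analysis.
From mathcomp Require Import ring lra zify.
Import Order.TTheory GRing.Theory Num.Theory.
Local Open Scope ring_scope.
Local Open Scope classical_set_scope.

Set Implicit Arguments. Unset Strict Implicit. Unset Printing Implicit Defensive.

Section Comb.
Variable R : realType.
Implicit Types x y q t : R.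

Definition rp x : R := Num.max 0 x.
Definition phi x : R := Num.min 1 (Num.max 0 x).
Definition beta (n : nat) q : R :=
  \sum_(k < n.+1) ('C(n, k))%:R * phi (k%:R + 1 - (n%:R + q) / 2).

Lemma phi_ge0 x : 0 <= phi x.
Proof. rewrite /phi minEle maxEle; repeat case: ifP; lra. Qed.

Lemma phiE x : phi x = rp x - rp (x - 1).
Proof. rewrite /phi /rp minEle !maxEle; repeat case: ifP; lra. Qed.

Lemma phi_sum x y : 1 <= x + y -> 1 <= phi x + phi y.
Proof. rewrite /phi !minEle !maxEle; repeat case: ifP; lra. Qed.

Lemma rp_conv x d : 0 <= d <= 1/2 ->
  rp (x + d) + rp (x - d) <= rp (x + 1/2) + rp (x - 1/2).
Proof. rewrite /rp !maxEle; repeat case: ifP; lra. Qed.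

Lemma beta_ge0 n q : 0 <= beta n q.
Proof. by apply: sumr_ge0 => k _; rewrite mulr_ge0 ?ler0n ?phi_ge0. Qed.

Lemma natS' (m : nat) : (m.+1)%:R = m%:R + 1 :> R.
Proof. by rewrite -natr1. Qed.

Lemma beta_rec n q : beta n.+1 q = beta n (q - 1) + beta n (q + 1).
Proof.
rewrite /beta big_ord_recl /=.
under eq_bigr => k _ do rewrite binS natrD mulrDl.
rewrite big_split /= addrA [RHS]addrC; congr (_ + _); last first.
  apply: eq_bigr => k _; congr (_ * phi _); rewrite /bump /= (natS' k) (natS' n); lra.
rewrite big_ord_recr /= [RHS]big_ord_recl /= (bin_small (ltnSn n)).
rewrite mul0r addr0 !bin0; congr (_ + _).
  congr (_ * phi _); rewrite (natS' n); lra.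
apply: eq_bigr => k _; congr (_ * phi _); rewrite /bump /= (natS' k) (natS' n); lra.
Qed.

Lemma beta_half n q : 0 <= q <= 1 -> 2 ^+ n <= 2 * beta n q.
Proof.
move=> hq.
have sumC : 2 ^+ n = \sum_(k < n.+1) ('C(n,k))%:R :> R.
  rewrite -natrX (expnDn 1 1 n) natr_sum; apply: eq_bigr => i _.
  by rewrite !exp1n !muln1.
have rev : beta n q = \sum_(k < n.+1) ('C(n, k))%:R * phi ((n - k)%:R + 1 - (n%:R + q)/2).
  rewrite /beta -(big_mkord xpredT (fun k => ('C(n, k))%:R * phi (k%:R + 1 - (n%:R + q) / 2))).
  rewrite big_rev_mkord subn0; apply: eq_bigr => k _; rewrite subSS bin_sub //.
  exact: leq_ord.
rewrite sumC (_ : 2 * beta n q = beta n q + beta n q); last by lra.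
rewrite {2}rev /beta -big_split /=; apply: ler_sum => k _; rewrite -mulrDr.
rewrite -[X in X <= _]mulr1; apply: ler_wpM2l; first exact: ler0n.
apply: phi_sum; rewrite natrB ?leq_ord //; lra.
Qed.

Definition dd (c : nat -> R) (k : nat) : R := (if k is j.+1 then c j else 0) - c k.

Lemma abel (c g : nat -> R) m :
  \sum_(k < m.+1) c k * (g k.+1 - g k) =
  \sum_(k < m.+1) dd c k * g k + c m * g m.+1.
Proof.
elim: m => [|m IH]; first by rewrite !big_ord_recl !big_ord0 /= /dd; lra.
rewrite big_ord_recr /= IH [in RHS]big_ord_recr /= /dd; lra.
Qed.

Lemma bin_dec n k : (n < k.*2)%N -> ('C(n, k) <= 'C(n, k.-1))%N.
Proof.
case: k => [//|m] /= h.
have e := mul_bin_left n m.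
have h2 : (n - m <= m.+1)%N by rewrite leq_subLR; move: h; rewrite doubleS; lia.
rewrite -(@leq_pmul2l m.+1) // e leq_mul2r h2 orbT //.
Qed.


Lemma rp0 x : x <= 0 -> rp x = 0.
Proof. by rewrite /rp maxEle => h; case: ifP => //; lra. Qed.

Lemma rp_conv' a b c e x d : 0 <= d <= 1/2 ->
  a = x + d -> b = x - d -> c = x + 1/2 -> e = x - 1/2 -> rp a + rp b <= rp c + rp e.
Proof. by move=> hd -> -> -> ->; exact: rp_conv. Qed.

Lemma beta_abel n q : beta n q =
  \sum_(k < n.+1) dd (fun k => ('C(n, k))%:R) k * rp (k%:R - (n%:R + q) / 2)
  + ('C(n, n))%:R * rp (n.+1%:R - (n%:R + q) / 2).
Proof.
rewrite -(abel (fun k => ('C(n, k))%:R) (fun k : nat => rp (k%:R - (n%:R + q) / 2))).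
apply: eq_bigr => k _; rewrite phiE; congr (_ * (rp _ - rp _)); rewrite ?natS'; lra.
Qed.

Lemma beta_conv n q t : 1 <= q -> 0 <= t <= 1 ->
  beta n (q - t) + beta n (q + t) <= beta n (q - 1) + beta n (q + 1).
Proof.
move=> hq ht; rewrite !beta_abel.
set c := (fun k => ('C(n, k))%:R) : nat -> R.
have H1 : \sum_(k < n.+1) dd c k * rp (k%:R - (n%:R + (q - t)) / 2) +
          \sum_(k < n.+1) dd c k * rp (k%:R - (n%:R + (q + t)) / 2) <=
          \sum_(k < n.+1) dd c k * rp (k%:R - (n%:R + (q - 1)) / 2) +
          \sum_(k < n.+1) dd c k * rp (k%:R - (n%:R + (q + 1)) / 2).
  rewrite -!big_split /=; apply: ler_sum => k _; rewrite -!mulrDr.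
  case: (leqP (k.*2) n) => hk.
    have hk' : k%:R * 2 <= n%:R :> R.
      by rewrite -(ler_nat R) -addnn natrD in hk; lra.
    rewrite (rp0 (x := k%:R - (n%:R + (q - t)) / 2)); last by lra.
    rewrite (rp0 (x := k%:R - (n%:R + (q + t)) / 2)); last by lra.
    rewrite (rp0 (x := k%:R - (n%:R + (q - 1)) / 2)); last by lra.
    rewrite (rp0 (x := k%:R - (n%:R + (q + 1)) / 2)); last by lra.
    by [].
  apply: ler_wpM2l.
    rewrite /dd /c; case: (nat_of_ord k) hk => [|j] hj /=; first by rewrite double0 ltn0 in hj.
    rewrite subr_ge0 ler_nat; exact: (bin_dec hj).
  apply: (rp_conv' (x := k%:R - (n%:R + q) / 2) (d := t / 2)); lra.
have H2 : c n * rp (n.+1%:R - (n%:R + (q - t)) / 2) + c n * rp (n.+1%:R - (n%:R + (q + t)) / 2)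
   <= c n * rp (n.+1%:R - (n%:R + (q - 1)) / 2) + c n * rp (n.+1%:R - (n%:R + (q + 1)) / 2).
  rewrite -!mulrDr; apply: ler_wpM2l; first exact: ler0n.
  apply: (rp_conv' (x := n.+1%:R - (n%:R + q) / 2) (d := t / 2)); lra.
rewrite /c in H1 H2; lra.
Qed.


Fixpoint cnt (s : seq R) (P : R -> bool) : nat :=
  if s is a :: s' then addn (cnt s' (fun v => P (a + v))) (cnt s' (fun v => P (- a + v)))
  else P 0.

Lemma cnt_ext s P Q : (forall v, P v = Q v) -> cnt s P = cnt s Q.
Proof.
elim: s P Q => [|a s IH] P Q h /=; first by rewrite h.
by congr addn; apply: IH => v; exact: h.
Qed.

Lemma cnt_disj s (P Q : R -> bool) : (forall v, P v -> Q v -> False) ->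
  (cnt s P + cnt s Q <= 2 ^ size s)%N.
Proof.
elim: s P Q => [|a s IH] P Q h /=.
  have := h 0; case: (P 0); case: (Q 0) => //= H; exfalso; exact: H.
have h1 := IH (fun v => P (a + v)) (fun v => Q (a + v)) (fun v => h _).
have h2 := IH (fun v => P (- a + v)) (fun v => Q (- a + v)) (fun v => h _).
rewrite expnS; lia.
Qed.

Lemma cnt_neg s P : cnt s P = cnt s (fun v => P (- v)).
Proof.
elim: s P => [|a s IH] P /=; first by rewrite oppr0.
rewrite (IH (fun v => P (a + v))) (IH (fun v => P (- a + v))) addnC.
congr (_ + _)%N; apply: cnt_ext => v; congr P; rewrite opprD ?opprK //.
Qed.

Lemma cnt_bound s q : (forall a, a \in s -> `|a| <= 1) -> 0 <= q ->
  (cnt s (fun v => q < v))%:R <= beta (size s) q.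
Proof.
elim: s q => [|a s IH] q hs hq.
  by rewrite /= ltNge hq /=; exact: beta_ge0.
case: (lerP q 1) => hq1.
  have hd := @cnt_disj (a :: s) (fun v => q < v) (fun v => v < - q).
  have e : cnt (a :: s) (fun v => v < - q) = cnt (a :: s) (fun v => q < v).
    by rewrite cnt_neg; apply: cnt_ext => v; rewrite ltrN2.
  rewrite e in hd; have hb := @beta_half (size (a :: s)) q ltac:(lra).
  have : (cnt (a :: s) (fun v => q < v) + cnt (a :: s) (fun v => q < v))%:R
    <= (2 ^ size (a :: s))%:R :> R.
    by rewrite ler_nat; apply: hd => v; lra.
  rewrite natrD natrX; move: hb; lra.
have ha : `|a| <= 1 by apply: hs; rewrite mem_head.
have hs' : forall b, b \in s -> `|b| <= 1 by move=> b hb; apply: hs; rewrite in_cons hb orbT.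
rewrite /= natrD beta_rec.
rewrite (@cnt_ext _ _ (fun v => q - a < v)); last by move=> v; rewrite ltrBlDl.
rewrite (@cnt_ext s (fun v => q < - a + v) (fun v => q + a < v)); last by move=> v; rewrite -ltrBlDl opprK.
have ha2 : - 1 <= a <= 1 by move: ha; rewrite ler_norml.
have i1 := IH (q - a) hs' ltac:(lra).
have i2 := IH (q + a) hs' ltac:(lra).
case: (lerP 0 a) => ha0.
  have hc := beta_conv (size s) (q := q) (t := a) ltac:(lra) ltac:(lra).
  lra.
have hc := beta_conv (size s) (q := q) (t := - a) ltac:(lra) ltac:(lra).
move: hc; rewrite !opprK; lra.
Qed.


Fixpoint dot (e s : seq R) : R :=
  match e, s with e1 :: e', a :: s' => e1 * a + dot e' s' | _, _ => 0 end.

Fixpoint signs (n : nat) : seq (seq R) :=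
  if n is n'.+1 then [seq 1 :: e | e <- signs n'] ++ [seq -1 :: e | e <- signs n']
  else [:: [::]].

Lemma cnt_count s P : cnt s P = count (fun e => P (dot e s)) (signs (size s)).
Proof.
elim: s P => [|a s IH] P /=; first by rewrite addn0.
rewrite count_cat !count_map !IH; congr addn; apply: eq_count => e /=.
  by rewrite mul1r.
by rewrite mulN1r.
Qed.

Lemma size_signs n : size (signs n) = (2 ^ n)%N.
Proof. by elim: n => //= n IH; rewrite size_cat !size_map IH expnS mul2n addnn. Qed.

Lemma signs_pm n e : e \in signs n -> size e = n /\ all (fun x => (x == 1) || (x == -1)) e.
Proof.
elim: n e => [|n IH] e /=; first by rewrite inE => /eqP ->.
rewrite mem_cat => /orP [] /mapP [e' /IH [h1 h2] ->] /=; rewrite h1 h2 eqxx ?orbT //.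
Qed.

Lemma dot_sum e s : dot e s = \sum_(i < size s) nth 0 e i * nth 0 s i.
Proof.
elim: s e => [|a s IH] [|x e] /=; rewrite ?big_ord0 //.
  by rewrite big1 // => i _; rewrite nth_nil mul0r.
by rewrite big_ord_recl /= IH.
Qed.

Lemma dot_mkseq e F n : dot e (mkseq F n) = \sum_(i < n) nth 0 e i * F i.
Proof.
rewrite dot_sum size_mkseq; apply: eq_bigr => i _; by rewrite nth_mkseq.
Qed.

Lemma phi_0 x : x <= 0 -> phi x = 0.
Proof. rewrite /phi minEle maxEle; repeat case: ifP; lra. Qed.
Lemma phi_1 x : 1 <= x -> phi x = 1.
Proof. rewrite /phi minEle maxEle; repeat case: ifP; lra. Qed.
Lemma phi_id x : 0 <= x <= 1 -> phi x = x.
Proof. rewrite /phi minEle maxEle; repeat case: ifP; lra. Qed.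

Lemma Bbound_beta n p : 0 <= p -> Bbound n p = beta n p / 2 ^+ n.
Proof.
move=> hp; rewrite /Bbound /= mulrC; congr (_ / _).
set nu := (n%:R + p) / 2.
have hnu : 0 <= nu by have := ler0n R n; rewrite /nu; lra.
have /andP [h1 h2] := truncn_itv hnu.
set k0 := Num.truncn nu in h1 h2 *.
have e : forall k : 'I_n.+1, ('C(n, k))%:R * phi (k%:R + 1 - nu) =
   (if (k == k0 :> nat) then (1 - (nu - k0%:R)) * ('C(n, k0))%:R else 0) +
   (if (k0 < k)%N then ('C(n, k))%:R else 0).
  move=> k; case: (ltngtP k k0) => hk.
  - rewrite phi_0 ?mulr0 ?addr0 //.
    have : (k.+1 <= k0)%N by []. rewrite -(ler_nat R) natS' => hk'; lra.
  - rewrite phi_1 ?mulr1 ?add0r //.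
    have : (k0.+1 <= k)%N by []. rewrite -(ler_nat R) natS' => hk'.
    rewrite natS' in h2; lra.
    rewrite hk addr0 phi_id; last by rewrite natS' in h2; lra.
    by rewrite mulrC; congr (_ * _); lra.
rewrite /beta (eq_bigr _ (fun k _ => e k)) big_split /=.
set X := (1 - (nu - k0%:R)) * ('C(n, k0))%:R.
have -> : \sum_(i < n.+1) (if (i == k0 :> nat) then X else 0) = (if (k0 < n.+1)%N then X else 0).
  by rewrite -big_mkcond (big_ord1_eq _ (fun _ => X)).
have -> : \sum_(k0.+1 <= k < n.+1) ('C(n, k))%:R =
    \sum_(i < n.+1) (if (k0 < i)%N then ('C(n, i))%:R else 0) :> R.
  by rewrite big_geq_mkord big_mkcond.
case: ifP => // /negbT; rewrite -leqNgt => hk.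
by rewrite /X bin_small // mulr0.
Qed.

End Comb.

Section Flip.
Variables (R : realType) (d : measure_display) (T : measurableType d) (P : probability T R).
Variable n : nat.
Variable z : 'I_n -> {RV P >-> R}.
Hypothesis hind : mutually_independent z.
Hypothesis hsym : forall l, symmetric_rv (z l).
Variable sg : 'I_n -> R.
Hypothesis hsg : forall l, sg l = 1 \/ sg l = -1.

Let Zf (t : T) : 'I_n -> R := fun l => z l t.
Let Zs (t : T) : 'I_n -> R := fun l => sg l * z l t.
Let box (r : 'I_n -> R) : set ('I_n -> R) := [set f | forall l, f l < r l].
Let Gb := [set B | exists r, B = box r].
Let Dg := [set V : set ('I_n -> R) | [/\ measurable (Zf @^-1` V),
   measurable (Zs @^-1` V) & P (Zf @^-1` V) = P (Zs @^-1` V)]].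

Lemma mlt (r : R) : measurable [set x : R | x < r].
Proof.
by have := @measurable_itv R `]-oo, r[%R; rewrite set_itvE.
Qed.

Lemma mgt (r : R) : measurable [set x : R | r < x].
Proof.
by have := @measurable_itv R `]r, +oo[%R; rewrite set_itvE.
Qed.

Let Bs (r : 'I_n -> R) (l : 'I_n) : set R :=
  if sg l == 1 then [set x | x < r l] else [set x | - r l < x].

Lemma mBs r l : measurable (Bs r l).
Proof. by rewrite /Bs; case: ifP => _; [exact: mlt | exact: mgt]. Qed.

Lemma Zf_box r : Zf @^-1` box r =
  \bigcap_(l in [set l | l \in [set: 'I_n]%SET]) (z l @^-1` [set x | x < r l]).
Proof.
apply/seteqP; split => t /=.
  by move=> h l _; exact: h.
by move=> h l; apply: h; rewrite /= ?inE.
Qed.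

Lemma N1neq : (-1 == 1 :> R) = false.
Proof. by rewrite lt_eqF //; lra. Qed.

Lemma Zs_box r : Zs @^-1` box r =
  \bigcap_(l in [set l | l \in [set: 'I_n]%SET]) (z l @^-1` Bs r l).
Proof.
have key : forall t l, (sg l * z l t < r l : Prop) = Bs r l (z l t).
  move=> t l; rewrite /Bs; case: (hsg l) => ->; rewrite ?eqxx ?mul1r //.
  by rewrite N1neq mulN1r /= ltrNl.
apply/seteqP; split => t /=.
  by move=> h l _; have := h l; rewrite /Zs key.
by move=> h l; rewrite /Zs key; apply: h; rewrite /= ?inE.
Qed.

Lemma triv_pre (U : Type) (f : T -> U) (F : nat -> set U) :
  trivIset setT F -> trivIset setT (fun k => f @^-1` F k).
Proof. by move=> tF i j _ _ [t [h1 h2]]; apply: tF => //; exists (f t). Qed.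

Lemma Gb_Dg : Gb `<=` Dg.
Proof.
move=> _ [r ->]; split.
- rewrite Zf_box; apply: fin_bigcap_measurable; first exact: finite_finset.
  by move=> l _; apply: measurable_funPTI; exact: mlt.
- rewrite Zs_box; apply: fin_bigcap_measurable; first exact: finite_finset.
  by move=> l _; apply: measurable_funPTI; exact: mBs.
rewrite Zf_box Zs_box.
have h1 := hind [set: 'I_n]%SET (fun l => mlt (r l)).
have h2 := hind [set: 'I_n]%SET (mBs r).
rewrite h1 h2.
apply: eq_bigr => l _; rewrite /Bs; case: (hsg l) => e; rewrite e ?eqxx // N1neq.
rewrite (hsym l (mlt (r l))); congr (P _).
by apply/seteqP; split => t /=; rewrite ltrNl.
Qed.

Lemma dynkin_Dg : dynkin Dg.
Proof.
split.
- by rewrite /Dg /= !preimage_setT; split => //; exact: measurableT.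
- move=> A [m1 m2 e]; rewrite /Dg /= -!preimage_setC; split.
  + exact: measurableC.
  + exact: measurableC.
  + by rewrite !probability_setC // e.
- move=> F tF hF; rewrite /Dg /= !preimage_bigcup; split.
  + by apply: bigcupT_measurable => k; case: (hF k).
  + by apply: bigcupT_measurable => k; case: (hF k).
  rewrite measure_bigcup; [ | by move=> k _; case: (hF k) | exact: triv_pre].
  rewrite measure_bigcup; [ | by move=> k _; case: (hF k) | exact: triv_pre].
  by apply: eq_eseriesr => k _; case: (hF k).
Qed.

Lemma sG_Dg : <<s Gb >> `<=` Dg.
Proof.
rewrite -setI_closed_g_dynkin_g_sigma_algebra.
  by apply: smallest_sub; [exact: dynkin_Dg | exact: Gb_Dg].
move=> _ _ [r ->] [r' ->]; exists (fun l => Num.min (r l) (r' l)).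
apply/seteqP; split => f /=.
  by move=> [h1 h2] l; rewrite lt_min h1 h2.
by move=> h; split => l; have := h l; rewrite lt_min => /andP [].
Qed.

Variable c : 'I_n -> R.
Hypothesis hc : forall l, 0 <= c l.
Variable q : R.
Let U := [set f : 'I_n -> R | \sum_(l < n) c l * f l < q].

Lemma U_sG : <<s Gb >> U.
Proof.
have [s0 sC sU] := smallest_sigma_algebra setT Gb.
pose F (k : nat) : set ('I_n -> R) :=
  if (unpickle k : option {ffun 'I_n -> rat}) is Some rho then
    (if \sum_(l < n) c l * ratr (rho l) < q then box (fun l => ratr (rho l)) else set0)
  else set0.
have -> : U = \bigcup_k F k.
  apply/seteqP; split => f.
    move=> hf; have {hf} hf : \sum_(l < n) c l * f l < q by exact: hf.
    set S := \sum_(l < n) c l.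
    have hS : 0 <= S by apply: sumr_ge0 => l _; exact: hc.
    set sf := \sum_(l < n) c l * f l in hf.
    set eta := (q - sf) / (1 + S).
    have he : 0 < eta by apply: divr_gt0; lra.
    have ee : eta * (1 + S) = q - sf by rewrite /eta divfK //; lra.
    have : forall l, exists r : rat, f l < ratr r < f l + eta.
      move=> l; have [r] := @rat_in_itvoo R (f l) (f l + eta) ltac:(lra).
      by rewrite in_itv /= => h; exists r.
    case/fin_all_exists => g hg.
    exists (pickle [ffun l => g l]) => //; rewrite /F pickleK.
    have hlt : \sum_(l < n) c l * ratr ([ffun l => g l] l) < q.
      apply: (@le_lt_trans _ _ (\sum_(l < n) c l * (f l + eta))).
        apply: ler_sum => l _; rewrite ffunE; apply: ler_wpM2l; first exact: hc.
        by case/andP: (hg l) => _ /ltW.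
      under eq_bigr => l _ do rewrite mulrDr.
      rewrite big_split /= -mulr_suml -/sf -/S.
      have : S * eta < eta * (1 + S) by nra.
      lra.
    rewrite hlt => l; rewrite ffunE; by case/andP: (hg l).
  move=> [k _]; rewrite /F; case: unpickle => [rho|//]; case: ifP => // hq hb.
  apply: le_lt_trans hq; apply: ler_sum => l _; apply: ler_wpM2l; first exact: hc.
  exact/ltW/hb.
apply: sU => k; rewrite /F; case: unpickle => [rho|]; last exact: s0.
case: ifP => _; last exact: s0.
by apply: sub_gen_smallest; exists (fun l => ratr (rho l)).
Qed.

Lemma flip_eq : [/\ measurable [set t | \sum_(l < n) c l * z l t < q],
  measurable [set t | \sum_(l < n) c l * (sg l * z l t) < q] &
  P [set t | \sum_(l < n) c l * z l t < q] =
  P [set t | \sum_(l < n) c l * (sg l * z l t) < q]].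
Proof. exact: (sG_Dg U_sG). Qed.

End Flip.

Lemma sum_count (I : Type) (R : realType) (s : seq I) (b : pred I) :
  \sum_(x <- s) ((b x)%:R : R) = (count b s)%:R.
Proof. by elim: s => [|x s IH]; rewrite ?big_nil ?big_cons //= IH natrD. Qed.


Lemma sum_const_seq (I : Type) (R : realType) (s : seq I) (k : R) :
  \sum_(x <- s) k = k * (size s)%:R.
Proof.
elim: s => [|a s IH]; first by rewrite big_nil mulr0.
by rewrite big_cons IH /= -[(size s).+1]addn1 natrD mulrDr mulr1 addrC.
Qed.

Unset Implicit Arguments.

Theorem mainTheorem20 (R : realType) (m n : nat) (A : 'M[R]_(m, n)) (b0 : 'cV[R]_m)
  (d : measure_display) (T : measurableType d) (P : probability T R)
  (N : 'I_m -> nat) (db : forall i : 'I_m, 'I_(N i) -> R)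
  (z : forall i : 'I_m, 'I_(N i) -> {RV P >-> R})
  (w : 'cV[R]_m) (x : 'cV[R]_n) (y s : 'cV[R]_m) :
  (n <= m)%N ->
  \rank A = n ->
  poly_bounded A b0 ->
  poly_nonempty_interior A b0 ->
  (forall i l, 0 <= db i l) ->
  (forall i, exists l, db i l != 0) ->
  (forall i, 0 < w i 0) ->
  \sum_(i < m) w i 0 = 1 ->
  weighted_center A b0 w x y s ->
  (forall i, mutually_independent (z i)) ->
  (forall i l, symmetric_rv (z i l)) ->
  (forall i l t, -1 <= z i l t <= 1) ->
  forall i : 'I_m,
    let delta := w i 0 / (y i 0 * norm1 (db i)) in
    (P [set t | ((A *m x) i 0 > b0 i 0 + \sum_(l < N i) db i l * z i l t)%R] <=
      (Bbound (N i) (delta * norm1 (db i) / maxentry (db i)))%:E)%E.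
Proof.
move=> hnm hrank hbd hint hdb0 hdbnz hw hsumw [hc1 hs hAy hsy] hind hsym hz i.
cbv zeta.
set M := maxentry (db i).
have hdbM : forall l, db i l <= M by move=> l; rewrite /M /maxentry; exact: le_bigmax.
have [l0 hl0] := hdbnz i.
have hl0p : 0 < db i l0 by rewrite lt_neqAle eq_sym hl0 hdb0.
have hM : 0 < M by have := hdbM l0; lra.
set si := s i 0.
have hsi : 0 < si := hs i.
have hax : (A *m x) i 0 = b0 i 0 - si.
  have e : (A *m x + s) i 0 = (A *m x) i 0 + s i 0 by rewrite !mxE.
  by rewrite -(congr1 (fun Mx : 'M[R]_(m, 1) => Mx i 0) hc1) e /si addrK.
have hy : y i 0 = w i 0 / si.
  by rewrite -(hsy i) [s i 0 * _]mulrC mulfK //; exact: lt0r_neq0.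
set nrm := norm1 (db i).
have hnrm : 0 < nrm.
  rewrite /nrm /norm1 (bigD1 l0) //=.
  have : 0 <= \sum_(j < N i | j != l0) `|db i j| by apply: sumr_ge0 => j _.
  have : 0 < `|db i l0| by rewrite normr_gt0.
  lra.
have hwi := hw i.
have hdelta : w i 0 / (y i 0 * nrm) * nrm / M = si / M.
  rewrite hy; congr (_ / _); field.
  by rewrite !gt_eqF.
rewrite hdelta.
set p := si / M.
have hp : 0 <= p by apply: divr_ge0; lra.
rewrite Bbound_beta //.
pose c := fun l => db i l / M.
have hc : forall l, 0 <= c l by move=> l; apply: divr_ge0 => //; lra.
have hc1' : forall l, c l <= 1.
  by move=> l; rewrite /c ler_pdivrMr // mul1r.
pose q := - p.
have hE : [set t | (b0 i 0 + \sum_(l < N i) db i l * z i l t < (A *m x) i 0)%R] =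
          [set t | \sum_(l < N i) c l * z i l t < q].
  apply/seteqP; split => t /=; rewrite hax.
  - have eS : \sum_(l < N i) c l * z i l t = (\sum_(l < N i) db i l * z i l t) / M.
      by rewrite mulr_suml; apply: eq_bigr => l _; rewrite /c mulrAC.
    rewrite eS /q /p -mulNr ltr_pM2r ?invr_gt0 //; lra.
  - have eS : \sum_(l < N i) c l * z i l t = (\sum_(l < N i) db i l * z i l t) / M.
      by rewrite mulr_suml; apply: eq_bigr => l _; rewrite /c mulrAC.
    rewrite eS /q /p -mulNr ltr_pM2r ?invr_gt0 //; lra.
rewrite hE.
set E := [set t | (\sum_(l < N i) c l * z i l t < q)%R].
set es := signs R (N i).
pose Ee (e : seq R) := [set t | \sum_(l < N i) c l * (nth 0 e l * z i l t) < q].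
have flipE : forall e, e \in es -> [/\ measurable E, measurable (Ee e) & P E = P (Ee e)].
  move=> e he; have [hsz hall] := signs_pm he.
  apply: (flip_eq (hind i) (hsym i) _ hc q) => l.
  have : nth 0 e l \in e by rewrite mem_nth // hsz.
  by move/(allP hall) => /orP [/eqP -> | /eqP ->]; [left | right].
have mE : measurable E.
  by have [] := flip_eq (hind i) (hsym i) (sg := fun _ => 1) (fun l => or_introl erefl) hc q.
pose Ee' e := if e \in es then Ee e else set0.
have mEe' : forall e, measurable (Ee' e).
  by move=> e; rewrite /Ee'; case: ifP => [he|_]; [by case: (flipE e he) | exact: measurable0].
have pt : forall t, (\sum_(e <- es) (\1_(Ee' e) t)%:E <= (beta (N i) p)%:E)%E.
  move=> t; rewrite sumEFin lee_fin.
  have -> : \sum_(e <- es) \1_(Ee' e) t =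
      \sum_(e <- es) (((\sum_(l < N i) c l * (nth 0 e l * z i l t) < q)%R : bool)%:R : R).
    rewrite big_seq_cond [RHS]big_seq_cond; apply: eq_bigr => e /andP [he _].
    rewrite indicE /Ee' he.
    case: (boolP (\sum_(l < N i) c l * (nth 0 e l * z i l t) < q)) => h.
      by rewrite mem_set.
    by rewrite memNset //; apply/negP.
  rewrite sum_count.
  pose F := fun j : nat => \sum_(l < N i | val l == j) c l * z i l t.
  have eF : forall l : 'I_(N i), F l = c l * z i l t.
    by move=> l; rewrite /F (big_pred1 l) // => l'; rewrite /= val_eqE.
  have -> : count (fun e => \sum_(l < N i) c l * (nth 0 e l * z i l t) < q) es =
            cnt (mkseq F (N i)) (fun v => v < q).
    rewrite cnt_count size_mkseq; apply: eq_count => e; rewrite dot_mkseq.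
    by congr (_ < q); apply: eq_bigr => l _; rewrite eF mulrCA.
  rewrite cnt_neg (@cnt_ext _ _ _ (fun v => p < v)); last by move=> v; rewrite /q ltrN2.
  have := @cnt_bound _ (mkseq F (N i)) p _ hp; rewrite size_mkseq; apply.
  move=> a; rewrite /mkseq => /mapP [j]; rewrite mem_iota add0n => /andP [_ hj] ->.
  rewrite (eF (Ordinal hj)) normrM ger0_norm //.
  have h2 := hc1' (Ordinal hj); have h1 := hc (Ordinal hj).
  have /andP [h3 h4] := hz i (Ordinal hj) t.
  have : `|z i (Ordinal hj) t| <= 1 by rewrite ler_norml h3 h4.
  nra.
have key : (\sum_(e <- es) P (Ee' e) <= (beta (N i) p)%:E)%E.
  rewrite (eq_bigr (fun e => (\int[P]_(t in setT) (\1_(Ee' e) t)%:E)%E)); last first.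
    by move=> e _; rewrite integral_indic // setIT.
  rewrite -ge0_integral_sum //; last by move=> e; apply/measurable_realfun.measurable_EFinP; exact: measurable_realfun.measurable_indic.
  apply: (@le_trans _ _ (\int[P]_(t in setT) (cst (beta (N i) p)%:E t))%E).
    apply: ge0_le_integral => //.
    - by move=> t _; first [exact: pt | apply: sume_ge0 => e _; rewrite lee_fin indicE ler0n].
    - by apply: emeasurable_sum => e; apply/measurable_realfun.measurable_EFinP; exact: measurable_realfun.measurable_indic.
  rewrite integral_cst // [X in (_ * X <= _)%E](_ : _ = 1%E) ?mule1 //; exact: probability_setT.
have eq1 : \sum_(e <- es) P (Ee' e) = \sum_(e <- es) P E.
  rewrite big_seq_cond [RHS]big_seq_cond; apply: eq_bigr => e /andP [he _].
  by rewrite /Ee' he; case: (flipE e he).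
have fE : P E \is a fin_num := fin_num_measure P E mE.
rewrite eq1 -(fineK fE) sumEFin lee_fin sum_const_seq /es size_signs natrX in key.
rewrite -(fineK fE) lee_fin ler_pdivlMr //; exact: exprn_gt0.
Qed.
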